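(* Let $k$ be a positive integer and let $(C,F)$ be a finite simple undirected graph with $|C|=k$, equipped with edge weights $w:F\to\mathbb{R}$. Suppose that: (C1) $(C,F)$ is connected; (C2) for every partition of $C$ into two disjoint sets $S,T$ (a cut), the cut weight $w(S,T)=\sum_{\{i,j\}\in F,\ i\in S,\ j\in T} w_{ij}$ is non-negative; (C3) for all distinct $i,j,k\in C$, if $\{i,j\}\in F$, $\{j,k\}\in F$ and $\{i,k\}\notin F$, then $w_{ij}+w_{jk}<0$. Then $(C,F)$ is complete, i.e. $\{i,j\}\in F$ for all distinct $i,j\in C$.
   Context: $w_{ij}$ denotes $w(\{i,j\})$ for an edge $\{i,j\}\in F$. *)

(* Defs.v *)
From HB Require Import structures.
From mathcomp Require Import all_boot all_order all_algebra.
Set Implicit Arguments. Unset Strict Implicit. Unset Printing Implicit Defensive.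
Import Order.TTheory GRing.Theory Num.Theory.
Local Open Scope ring_scope.

(* A finite simple undirected graph on vertex set C: symmetric, irreflexive
   adjacency relation e; the edge set F is {{i,j} | e i j}. *)
Definition simple_graph (C : finType) (e : rel C) : Prop :=
  symmetric e /\ irreflexive e.

Definition connected_graph (C : finType) (e : rel C) : Prop :=
  forall x y : C, connect e x y.

Definition cut_weight (R : numDomainType) (C : finType) (e : rel C)
    (w : {set C} -> R) (S : {set C}) : R :=
  \sum_(i in S) \sum_(j in ~: S | e i j) w [set i; j].

Definition complete_graph (C : finType) (e : rel C) : Prop :=
  forall i j : C, i != j -> e i j.

(* Main.v *)
Require Import Defs.
From HB Require Import structures.
From mathcomp Require Import all_boot all_order all_algebra.
From mathcomp Require Import lra.
Import Order.TTheory GRing.Theory Num.Theory.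
Local Open Scope ring_scope.

Lemma sum_lt0_wit (R : realFieldType) (I : finType) (F : I -> R) (i0 : I) :
  (forall i, F i <= 0) -> F i0 < 0 -> \sum_i F i < 0.
Proof.
move=> Hle Hlt; rewrite (bigD1 i0) //=.
have : \sum_(i | i != i0) F i <= 0 by apply: sumr_le0 => i _; exact: Hle.
lra.
Qed.

Lemma triple_swap (R : realFieldType) (C : finType) (h : C -> C -> C -> R) :
  \sum_z \sum_i \sum_j h z i j = \sum_z \sum_i \sum_j h j i z.
Proof.
have E1 : \sum_z \sum_i \sum_j h j i z = \sum_z \sum_j \sum_i h j i z.
  by apply: eq_bigr => z _; rewrite exchange_big.
rewrite E1 [RHS]exchange_big /=.
by apply: eq_bigr => z _; rewrite exchange_big.
Qed.

Theorem proposition1 (R : realFieldType) (k : nat) (C : finType) (e : rel C)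
    (w : {set C} -> R) :
  (0 < k)%N -> #|C| = k -> simple_graph e ->
  (* (C1) *) connected_graph e ->
  (* (C2) *) (forall S : {set C}, 0 <= cut_weight e w S) ->
  (* (C3) *) (forall i j l : C, i != j -> j != l -> i != l ->
                e i j -> e j l -> ~~ e i l ->
                w [set i; j] + w [set j; l] < 0) ->
  complete_graph e.
Proof.
move=> _ _ [esym eirr] Hconn Hcut H3 a b Hab.
apply/negPn/negP => Hnab.
pose P z i j := [&& e i j, e z i, j != z & ~~ e z j].
have PS : forall z i j, P z i j = P j i z.
  move=> z i j; rewrite /P (esym i z) (esym j i) (esym j z) (eq_sym z j).
  by case: (e i j); case: (e z i); case: (e z j); case: (j == z).
have [z0 [i0 [j0 Hp]]] : exists z i j, P z i j.
  case: (boolP [exists z, exists i, exists j, P z i j]).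
    by move=> /existsP [z /existsP [i /existsP [j Hp]]]; exists z, i, j.
  move=> /negP Hn; exfalso.
  have HnP : forall z i j, e i j -> e z i -> j != z -> e z j.
    move=> z i j Hij Hzi Hjz; apply/negPn/negP => Hzj; apply: Hn.
    by apply/existsP; exists z; apply/existsP; exists i; apply/existsP; exists j;
      rewrite /P Hij Hzi Hjz Hzj.
  pose Q := [pred y | (y == a) || e a y].
  have HQ : closed e Q.
    have step : forall x y, e x y -> Q x -> Q y.
      move=> x y Hxy; rewrite !inE => /orP [/eqP Ex | Hax].
        by rewrite -Ex Hxy orbT.
      case: (eqVneq y a) => [-> | Hya] //=.
      by apply: (HnP a x y) => //; rewrite esym.
    move=> x y Hxy; apply/idP/idP; first exact: step.
    by apply: step; rewrite esym.
  have := closed_connect HQ (Hconn a b); rewrite !inE eqxx /=.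
  by rewrite eq_sym (negbTE Hab) (negbTE Hnab).
pose S z := [set x | (x == z) || e z x].
have bool_eq : forall z i j, [&& i \in S z, j \in ~: S z & e i j] = P z i j.
  move=> z i j; rewrite /P !inE.
  case: (eqVneq i z) => [-> | Hiz] /=.
    by rewrite eirr; case: (e z j); case: (j == z).
  by case: (e z i); case: (e i j); case: (j == z); case: (e z j).
have cutE : forall z, cut_weight e w (S z) =
    \sum_i \sum_j (if P z i j then w [set i; j] else 0).
  move=> z; rewrite /cut_weight big_mkcond; apply: eq_bigr => i _ /=.
  case: (boolP (i \in S z)) => Hi.
    rewrite big_mkcond; apply: eq_bigr => j _.
    by rewrite -bool_eq Hi.
  by rewrite big1 // => j _; rewrite -bool_eq (negbTE Hi).
have T0 : 0 <= \sum_z \sum_i \sum_j (if P z i j then w [set i; j] else 0).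
  by apply: sumr_ge0 => z _; rewrite -cutE.
have Tsw : \sum_z \sum_i \sum_j (if P z i j then w [set i; j] else 0)
         = \sum_z \sum_i \sum_j (if P z i j then w [set z; i] else 0).
  rewrite triple_swap; apply: eq_bigr => z _; apply: eq_bigr => i _.
  apply: eq_bigr => j _; rewrite -(PS z i j).
  by case: (P z i j) => //; rewrite setUC.
pose G z i j := if P z i j then w [set z; i] + w [set i; j] else 0.
have Glt : forall z i j, P z i j -> G z i j < 0.
  move=> z i j Hp'; rewrite /G Hp'.
  move: Hp' => /and4P [Hij Hzi Hjz Hnzj].
  apply: H3 => //.
  - by apply/eqP => E; rewrite E eirr in Hzi.
  - by apply/eqP => E; rewrite E eirr in Hij.
  - by rewrite eq_sym.
have Gle : forall z i j, G z i j <= 0.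
  move=> z i j; case: (boolP (P z i j)) => Hq; first exact/ltW/Glt.
  by rewrite /G (negbTE Hq).
have Tneg : \sum_z \sum_i \sum_j G z i j < 0.
  apply: (@sum_lt0_wit _ _ _ z0).
    by move=> z; apply: sumr_le0 => i _; apply: sumr_le0 => j _; exact: Gle.
  apply: (@sum_lt0_wit _ _ _ i0).
    by move=> i; apply: sumr_le0 => j _; exact: Gle.
  apply: (@sum_lt0_wit _ _ _ j0); first exact: Gle.
  exact: Glt.
have GE : \sum_z \sum_i \sum_j G z i j =
    \sum_z \sum_i \sum_j (if P z i j then w [set z; i] else 0) +
    \sum_z \sum_i \sum_j (if P z i j then w [set i; j] else 0).
  rewrite -big_split; apply: eq_bigr => z _; rewrite -big_split.
  apply: eq_bigr => i _; rewrite -big_split; apply: eq_bigr => j _.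
  by rewrite /G /=; case: (P z i j); rewrite ?addr0.
move: T0 Tneg; rewrite GE -Tsw.
set A := \sum_z _.
move=> T0 Tneg; lra.
Qed.
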